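(* Let $\mathcal G$ be a CFG. Suppose there exist: (1) an inductive invariant $\mathsf{Inv}$ containing the initial state; (2) a supermartingale function $V:\mathsf{Inv}\to\mathbb R$ on $\mathsf{Inv}$ with $V(\sigma_\bot)=0$ and $V(\sigma)>0$ for every non-terminal $\sigma\in\mathsf{Inv}$; (3) a function $U:\mathsf{Inv}\to\mathbb N$ with $U(\sigma_\bot)=0$ such that: (a) at every non-terminal assignment or nondeterministic state $\sigma\in\mathsf{Inv}$, $U(\sigma)>U(\sigma')$ for every successor $\sigma'$; (b) for every $r\in\mathbb R$, letting $V_{\le r}=\{\sigma\in\mathsf{Inv}: V(\sigma)\le r\}$: (i) $U$ is bounded on $V_{\le r}$, and (ii) there is $\epsilon_r>0$ such that for every non-terminal probabilistic state $(l,\mathbf x)\in V_{\le r}$, $\sum \mathsf{Pr}(l,l')[\mathbf x]>\epsilon_r$, where the sum ranges over the successors $(l',\mathbf x')$ with $U(l',\mathbf x')<U(l,\mathbf x)$. Then $\mathcal G$ is almost-surely terminating, i.e. $\Pr_{term}(\mathcal G)=1$.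
   Context: A probabilistic control flow graph (CFG) is a tuple $\mathcal G=(L,V,l_{init},\mathbf x_{init},\mapsto,G,\mathsf{Pr},\mathsf{Upd})$. $L$ is a finite set of locations, partitioned into assignment, nondeterministic and probabilistic locations. The variables in $V$ range over $\mathbb Q$. $(l_{init},\mathbf x_{init})$ is the initial state. There are finitely many guarded transitions. At probabilistic locations, each outgoing transition $(l,l')$ carries a probability expression $\mathsf{Pr}(l,l')$ whose values are positive and, over the enabled transitions, sum to $1$. Assignment locations have at most one outgoing transition, carrying an update of one variable by an arithmetic expression. A state is a pair $(l,\mathbf x)$, and successors are given by enabled transitions. Every state has at least one, and finitely many, successors. A scheduler resolves nondeterministic choices as a function of the finite path so far, and each scheduler $\mathfrak s$ induces a probability measure $\mathbb P_{\mathfrak s}$ on runs. The terminal state is $\sigma_\bot=(l_{out},\mathbf 0)$. $\Pr_{term}(\mathcal G)=\inf_{\mathfrak s}\mathbb P_{\mathfrak s}[\text{run visits }\sigma_\bot]$. An inductive invariant is a set of states closed under taking successors. A function $f:\mathsf{Inv}\to\mathbb R$ is a supermartingale function on $\mathsf{Inv}$ if, for every non-terminal $(l,\mathbf x)\in\mathsf{Inv}$: - if the state is an assignment or nondeterministic state, then $f(l,\mathbf x)\ge f(\sigma')$ for every successor $\sigma'$; - if it is a probabilistic state, then $f(l,\mathbf x)\ge\sum\mathsf{Pr}(l,l')[\mathbf x]\,f(l',\mathbf x')$, where the sum is over its successors. *)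

(* Defs.v *)
From HB Require Import structures.
From mathcomp Require Import all_boot all_order all_algebra.
From mathcomp Require Import all_classical all_reals.
Set Implicit Arguments. Unset Strict Implicit. Unset Printing Implicit Defensive.
Import Order.TTheory GRing.Theory Num.Theory.
Local Open Scope classical_set_scope.
Local Open Scope ring_scope.

Inductive loc_kind := KAssign | KNondet | KProb.

(* Arithmetic expressions, guards and
   probability expressions are represented semantically, as functions of the
   current valuation of the (finitely many) program variables. *)
Record CFG := {
  Loc : finType;
  Var : finType;
  kind : Loc -> loc_kind;
  l_init : Loc;
  x_init : {ffun Var -> rat};
  l_out : Loc;
  trans : rel Loc;
  guard : Loc -> Loc -> {ffun Var -> rat} -> bool;
  Prb : Loc -> Loc -> {ffun Var -> rat} -> rat;
  Upd : Loc -> Loc -> option (Var * ({ffun Var -> rat} -> rat))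
        (* Upd(l,l') : Some (v, e) is "v := e"; None is the no-op update *)
}.

Arguments kind : clear implicits.
Arguments trans : clear implicits.
Arguments guard : clear implicits.
Arguments Prb : clear implicits.
Arguments Upd : clear implicits.

Section CFGSemantics.
Variable G : CFG.

Definition state := (Loc G * {ffun Var G -> rat})%type.

Definition sigma_init : state := (l_init G, x_init G).
Definition sigma_bot : state := (l_out G, [ffun _ => 0]).

Definition enabled (s : state) (l' : Loc G) : bool :=
  trans G s.1 l' && guard G s.1 l' s.2.

Definition cfg_next (s : state) (l' : Loc G) : state :=
  (l', if kind G s.1 is KAssign then
         match Upd G s.1 l' with
         | Some (v, e) => [ffun w => if w == v then e s.2 else s.2 w]
         | None => s.2
         end
       else s.2).

Definition cfg_succ (s s' : state) : Prop := exists2 l', enabled s l' & s' = cfg_next s l'.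

Definition wf_cfg : Prop :=
  [/\
      (forall l l1 l2, kind G l = KAssign -> trans G l l1 -> trans G l l2 -> l1 = l2),
      (forall s : state, exists l', enabled s l'),
      (forall s : state, kind G s.1 = KProb -> forall l', enabled s l' ->
          0 < Prb G s.1 l' s.2) &
      (forall s : state, kind G s.1 = KProb ->
          \sum_(l' | enabled s l') Prb G s.1 l' s.2 = 1)].

(* A (history-dependent, deterministic) scheduler: given the finite path so far
   (history h followed by the current state s), picks the next location. *)
Definition scheduler := seq state -> state -> Loc G.

Definition valid_sched (sc : scheduler) : Prop :=
  forall h s, kind G s.1 = KNondet -> enabled s (sc h s).

Variable R : realType.

(* Probability, under scheduler sc, that the run starting with the finite path
   h ++ [:: s] visits sigma_bot within at most n further steps. *)
Fixpoint reach (sc : scheduler) (n : nat) (h : seq state) (s : state) : R :=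
  if s == sigma_bot then 1 else
  match n with
  | 0 => 0
  | n'.+1 =>
    match kind G s.1 with
    | KAssign => \sum_(l' | enabled s l') reach sc n' (rcons h s) (cfg_next s l')
    | KNondet => reach sc n' (rcons h s) (cfg_next s (sc h s))
    | KProb => \sum_(l' | enabled s l')
                 ratr (Prb G s.1 l' s.2) * reach sc n' (rcons h s) (cfg_next s l')
    end
  end.

(* P_sc[run visits sigma_bot] = sup_n P_sc[visit within n steps]
   (continuity of the measure from below). *)
Definition prob_term_sched (sc : scheduler) : R :=
  sup (range (fun n => reach sc n [::] sigma_init)).

Definition Pr_term : R :=
  inf [set p | exists2 sc, valid_sched sc & p = prob_term_sched sc].

Definition inductive_invariant (Inv : set state) : Prop :=
  forall s s', Inv s -> cfg_succ s s' -> Inv s'.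

Definition supermartingale (Inv : set state) (f : state -> R) : Prop :=
  forall s, Inv s -> s != sigma_bot ->
    (kind G s.1 <> KProb -> forall s', cfg_succ s s' -> f s' <= f s) /\
    (kind G s.1 = KProb ->
       \sum_(l' | enabled s l') ratr (Prb G s.1 l' s.2) * f (cfg_next s l') <= f s).

End CFGSemantics.

(* Main.v *)
Require Import Defs.
From HB Require Import structures.
From mathcomp Require Import all_boot all_order all_algebra.
From mathcomp Require Import all_classical all_reals.
From mathcomp Require Import ring lra.
Import Order.TTheory GRing.Theory Num.Theory.
Local Open Scope classical_set_scope.
Local Open Scope ring_scope.
Lemma geo_aux (R : realType) (d : R) k : 0 <= d <= 1 -> (1 - d) ^+ k * (1 + k%:R * d) <= 1.
Proof.
move=> /andP[d0 d1]; elim: k => [|k IH]; first by rewrite expr0 mul0r addr0 mulr1.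
have y0 : 0 <= (1 - d) ^+ k by rewrite exprn_ge0 // subr_ge0.
have x0 : 0 <= k%:R :> R by rewrite ler0n.
rewrite exprSr -natr1.
set y := (1 - d) ^+ k in IH y0 *; set x := k%:R in IH x0 *.
have : 0 <= y * (d * d) * (x + 1) by rewrite !mulr_ge0 // addr_ge0.
nra.
Qed.
Lemma geo_small (R : realType) (d e : R) : 0 < d <= 1 -> 0 < e -> exists k, (1 - d) ^+ k <= e.
Proof.
move=> /andP[d0 d1] e0.
have hb : 0 <= (e * d)^-1 by rewrite invr_ge0 mulr_ge0 // ltW.
exists (Num.Def.archi_bound (e * d)^-1).
set k := Num.Def.archi_bound _.
have Hk := archi_boundP hb; rewrite -/k in Hk.
have H := @geo_aux R d k (ltac:(rewrite ltW //=) : 0 <= d <= 1).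
have y0 : 0 <= (1 - d) ^+ k by rewrite exprn_ge0 // subr_ge0.
have ed0 : 0 < e * d by rewrite mulr_gt0.
have H2 : 1 < e * d * k%:R by rewrite -ltr_pdivrMl // mulr1.
set y := (1 - d) ^+ k in H y0 *; set x := k%:R in H H2 *.
nra.
Qed.
Section Proof.
Variables (R : realType) (G : CFG).
Hypothesis Hwf : wf_cfg G.
Let st := state G.

Lemma prb_ge0 (s : st) l' : kind G s.1 = KProb -> enabled s l' ->
  0 <= ratr (Prb G s.1 l' s.2) :> R.
Proof.
move=> Hk He; case: Hwf => _ _ Hp _.
by rewrite ler0q; apply: ltW; apply: Hp.
Qed.

Lemma prb_sum1 (s : st) : kind G s.1 = KProb ->
  \sum_(l' | enabled s l') ratr (Prb G s.1 l' s.2) = 1 :> R.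
Proof.
move=> Hk; case: Hwf => _ _ _ Hs.
by rewrite -rmorph_sum Hs // rmorph1.
Qed.

Lemma assign_sum (s : st) : kind G s.1 = KAssign ->
  exists2 l0, enabled s l0 & forall F : Loc G -> R,
    \sum_(l' | enabled s l') F l' = F l0.
Proof.
move=> Hk; case: Hwf => Hu He _ _.
have [l0 H0] := He s; exists l0 => // F.
apply: big_pred1 => l /=.
apply/idP/eqP => [Hl|->//].
by move: Hl H0; rewrite /enabled => /andP[Ht _] /andP[Ht0 _]; apply: (Hu s.1).
Qed.

Variable sc : scheduler G.
Hypothesis Hsc : valid_sched sc.

Lemma reach_ge0 n h (s : st) : 0 <= reach R sc n h s.
Proof.
elim: n h s => [|n IH] h s /=; first by case: ifP.
case: ifP => // _.
case Hk: (kind G s.1) => //.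
- by apply: sumr_ge0 => l _; apply: IH.
- by apply: sumr_ge0 => l Hl; apply: mulr_ge0; [apply: prb_ge0|apply: IH].
Qed.

Lemma reach_le1 n h (s : st) : reach R sc n h s <= 1.
Proof.
elim: n h s => [|n IH] h s /=; first by case: ifP.
case: ifP => // _.
case Hk: (kind G s.1) => //.
- by have [l0 _ ->] := assign_sum s Hk; apply: IH.
- rewrite -(prb_sum1 s Hk); apply: ler_sum => l Hl.
  by rewrite -[leRHS]mulr1; apply: ler_wpM2l; [apply: prb_ge0|apply: IH].
Qed.


Variables (Inv : set st) (V : st -> R) (U : st -> nat).
Hypothesis HInv : inductive_invariant Inv.

Fixpoint FS (r : R) (psi : seq st -> st -> R) (n : nat) (h : seq st) (s : st) : R :=
  if s == sigma_bot G then 0 else if r < V s then 0 else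
  match n with
  | 0 => psi h s
  | n'.+1 =>
    match kind G s.1 with
    | KAssign => \sum_(l' | enabled s l') FS r psi n' (rcons h s) (cfg_next s l')
    | KNondet => FS r psi n' (rcons h s) (cfg_next s (sc h s))
    | KProb => \sum_(l' | enabled s l')
                 ratr (Prb G s.1 l' s.2) * FS r psi n' (rcons h s) (cfg_next s l')
    end
  end.

Definition one : seq st -> st -> R := fun _ _ => 1.

Lemma FS_stop r psi n h s : (s == sigma_bot G) || (r < V s) -> FS r psi n h s = 0.
Proof. by case/orP => H; case: n => [|n] /=; rewrite H //; case: ifP. Qed.

Lemma FS_ge0 r psi n h s : (forall h s, 0 <= psi h s) -> 0 <= FS r psi n h s.
Proof.
move=> Hp; elim: n h s => [|n IH] h s /=; first by case: ifP => _ //; case: ifP => _ //; apply: Hp.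
case: ifP => _; first by rewrite ?ler01 ?mulr0.
case: ifP => _; first by rewrite ?ler01 ?mulr0.
case Hk: (kind G s.1) => //.
- by apply: sumr_ge0 => l _; apply: IH.
- by apply: sumr_ge0 => l Hl; apply: mulr_ge0; [apply: prb_ge0|apply: IH].
Qed.

Lemma FS_le1 r n h s : FS r one n h s <= 1.
Proof.
elim: n h s => [|n IH] h s /=; first by case: ifP => _ //; case: ifP => _ //.
case: ifP => _; first by rewrite ?ler01.
case: ifP => _; first by rewrite ?ler01.
case Hk: (kind G s.1) => //.
- by have [l0 _ ->] := assign_sum s Hk; apply: IH.
- rewrite -(prb_sum1 s Hk); apply: ler_sum => l Hl.
  by rewrite -[leRHS]mulr1; apply: ler_wpM2l; [apply: prb_ge0|apply: IH].
Qed.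

Lemma FS_const r k n h s : FS r (fun _ _ => k) n h s = k * FS r one n h s.
Proof.
elim: n h s => [|n IH] h s /=; first by case: ifP => _; rewrite ?mulr0 //; case: ifP => _; rewrite ?mulr0 ?mulr1.
case: ifP => _; rewrite ?mulr0 //.
case: ifP => _; rewrite ?mulr0 //.
case Hk: (kind G s.1) => //.
- by rewrite mulr_sumr; apply: eq_bigr => l _; apply: IH.
- by rewrite mulr_sumr; apply: eq_bigr => l _; rewrite IH mulrCA.
Qed.

Lemma succ_next (s : st) l : enabled s l -> cfg_succ s (cfg_next s l).
Proof. by move=> H; exists l. Qed.

Lemma FS_mono r psi1 psi2 n h s :
  (forall h s, Inv s -> psi1 h s <= psi2 h s) -> Inv s ->
  FS r psi1 n h s <= FS r psi2 n h s.
Proof.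
move=> Hp; elim: n h s => [|n IH] h s Is /=; first by case: ifP => _ //; case: ifP => _ //; rewrite Hp.
case: ifP => _; first by rewrite ?ler01.
case: ifP => _; first by rewrite ?ler01.
case Hk: (kind G s.1) => //.
- have [l0 H0 E] := assign_sum s Hk; rewrite !E.
  by apply: IH; apply: HInv Is _; apply: succ_next.
- by apply: IH; apply: HInv Is _; apply: succ_next; apply: Hsc.
- apply: ler_sum => l Hl; apply: ler_wpM2l; first by apply: prb_ge0.
  by apply: IH; apply: HInv Is _; apply: succ_next.
Qed.

Lemma FS_comp r psi m n h s :
  FS r psi (m + n) h s = FS r (fun h' s' => FS r psi n h' s') m h s.
Proof.
elim: m h s => [|m IH] h s.
  rewrite add0n /=; case: ifP => H0; first by rewrite FS_stop ?H0.
  by case: ifP => H1; first by rewrite FS_stop ?H1 ?orbT.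
rewrite addSn /=; case: ifP => _; first by rewrite ?ler01.
case: ifP => _; first by rewrite ?ler01.
case: (kind G s.1) => //.
- by apply: eq_bigr => l _; apply: IH.
- by apply: eq_bigr => l _; rewrite IH.
Qed.


Hypothesis HVsm : supermartingale Inv V.
Hypothesis HVbot : V (sigma_bot G) = 0.
Hypothesis HVpos : forall s, Inv s -> s != sigma_bot G -> 0 < V s.
Hypothesis HUbot : U (sigma_bot G) = 0%N.
Hypothesis HUdec : forall s, Inv s -> s != sigma_bot G -> kind G s.1 <> KProb ->
     forall s', cfg_succ s s' -> (U s' < U s)%N.

Lemma V_ge0 s : Inv s -> 0 <= V s.
Proof.
move=> Is; case Hb: (s == sigma_bot G); first by rewrite (eqP Hb) HVbot.
by apply: ltW; apply: HVpos; rewrite ?Hb.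
Qed.

Lemma reach_bot n h s : s == sigma_bot G -> reach R sc n h s = 1.
Proof. by move=> H; case: n => [|n] /=; rewrite H. Qed.

Lemma reach_FS r n h s : 0 < r -> Inv s ->
  1 - reach R sc n h s - FS r one n h s <= V s / r.
Proof.
move=> r0; elim: n h s => [|n IH] h s Is.
  have V0 := V_ge0 s Is; have Vr : 0 <= V s / r by apply: divr_ge0 => //; apply: ltW.
  case Hb: (s == sigma_bot G).
    by rewrite reach_bot // FS_stop ?Hb // subrr subr0.
  case Hr: (r < V s).
    rewrite FS_stop ?Hr ?orbT // subr0; have := reach_ge0 0 h s.
    have : 1 <= V s / r by rewrite ler_pdivlMr // mul1r ltW.
    lra.
  by rewrite /= Hb Hr /one; lra.
have V0 := V_ge0 s Is; have Vr : 0 <= V s / r by apply: divr_ge0 => //; apply: ltW.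
case Hb: (s == sigma_bot G).
  by rewrite reach_bot // FS_stop ?Hb // subrr subr0.
case Hr: (r < V s).
  rewrite FS_stop ?Hr ?orbT // subr0; have := reach_ge0 n.+1 h s.
  have : 1 <= V s / r by rewrite ler_pdivlMr // mul1r ltW.
  lra.
have Hb' : s != sigma_bot G by rewrite Hb.
have [Hdet Hprob] := HVsm s Is Hb'.
have Hstep : forall s', cfg_succ s s' -> kind G s.1 <> KProb ->
    1 - reach R sc n (rcons h s) s' - FS r one n (rcons h s) s' <= V s / r.
  move=> s' Hs' Hk; apply: le_trans (IH _ _ (HInv _ _ Is Hs')) _.
  by rewrite ler_pM2r ?invr_gt0 //; apply: Hdet.
rewrite /= Hb Hr.
case Hk: (kind G s.1).
- have [l0 H0 E] := assign_sum s Hk; rewrite !E.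
  by apply: Hstep; [apply: succ_next|rewrite Hk].
- by apply: Hstep; [apply: succ_next; apply: Hsc|rewrite Hk].
have -> : forall a b : st -> R, 1 - \sum_(l | enabled s l) ratr (Prb G s.1 l s.2) * a (cfg_next s l)
   - \sum_(l | enabled s l) ratr (Prb G s.1 l s.2) * b (cfg_next s l) =
   \sum_(l | enabled s l) ratr (Prb G s.1 l s.2) * (1 - a (cfg_next s l) - b (cfg_next s l)).
  move=> a b; rewrite -{1}(prb_sum1 s Hk) -!sumrB; apply: eq_bigr => l _.
  by rewrite !mulrBr mulr1.
apply: (@le_trans _ _ (\sum_(l | enabled s l) ratr (Prb G s.1 l s.2) * (V (cfg_next s l) / r))).
  apply: ler_sum => l Hl; apply: ler_wpM2l; first by apply: prb_ge0.
  by apply: IH; apply: HInv Is _; apply: succ_next.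
under eq_bigr do rewrite mulrA.
by rewrite -mulr_suml ler_pM2r ?invr_gt0 //; apply: Hprob.
Qed.


Lemma FS_L r (c : R) : 0 < c -> c <= 1 ->
  (forall s, Inv s -> V s <= r -> s != sigma_bot G -> kind G s.1 = KProb ->
     c < \sum_(l' | enabled s l' && (U (cfg_next s l') < U s)%N)
                  ratr (Prb G s.1 l' s.2)) ->
  forall u m h s, Inv s -> (U s <= u)%N -> (u <= m)%N ->
    FS r one m h s <= 1 - c ^+ u.
Proof.
move=> c0 c1 Hc; elim=> [|u IH] m h s Is Hu Hm.
  case Hb: (s == sigma_bot G); first by rewrite FS_stop ?Hb // expr0 subrr.
  case Hr: (r < V s); first by rewrite FS_stop ?Hr ?orbT // expr0 subrr.
  exfalso; have Hb' : s != sigma_bot G by rewrite Hb.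
  have HU0 : U s = 0%N by apply/eqP; rewrite -leqn0.
  case Hk: (kind G s.1).
  - case: Hwf => _ He _ _; have [l Hl] := He s.
    have Hk' : kind G s.1 <> KProb by rewrite Hk.
    by have := HUdec s Is Hb' Hk' _ (succ_next _ _ Hl); rewrite HU0.
  - case: Hwf => _ He _ _; have [l Hl] := He s.
    have Hk' : kind G s.1 <> KProb by rewrite Hk.
    by have := HUdec s Is Hb' Hk' _ (succ_next _ _ Hl); rewrite HU0.
  have := Hc s Is; rewrite leNgt Hr => /(_ isT Hb' Hk).
  by rewrite big_pred0 ?ltNge ?(ltW c0) // => l; rewrite HU0 ltn0 andbF.
case: m Hm => [//|m] Hm.
case Hb: (s == sigma_bot G).
  by rewrite FS_stop ?Hb // subr_ge0 exprn_ile1 // ltW.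
case Hr: (r < V s).
  by rewrite FS_stop ?Hr ?orbT // subr_ge0 exprn_ile1 // ltW.
have Hb' : s != sigma_bot G by rewrite Hb.
have cu0 : 0 <= c ^+ u by rewrite exprn_ge0 // ltW.
have Hcu : c ^+ u.+1 <= c ^+ u by rewrite exprS ler_piMl.
have Hdet : forall s', cfg_succ s s' -> kind G s.1 <> KProb ->
    FS r one m (rcons h s) s' <= 1 - c ^+ u.+1.
  move=> s' Hs' Hk; apply: le_trans (IH m _ s' (HInv _ _ Is Hs') _ Hm) _.
    by rewrite -ltnS; apply: leq_trans (HUdec s Is Hb' Hk _ Hs') Hu.
  by rewrite lerB.
rewrite /= Hb Hr.
case Hk: (kind G s.1).
- have [l0 H0 E] := assign_sum s Hk; rewrite !E.
  by apply: Hdet; [apply: succ_next|rewrite Hk].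
- by apply: Hdet; [apply: succ_next; apply: Hsc|rewrite Hk].
apply: (@le_trans _ _ (\sum_(l | enabled s l) ratr (Prb G s.1 l s.2) *
   (1 - (if (U (cfg_next s l) < U s)%N then c ^+ u else 0)))).
  apply: ler_sum => l Hl; apply: ler_wpM2l; first by apply: prb_ge0.
  case: ifP => Hlt; last by rewrite subr0 FS_le1.
  apply: IH => //; first by apply: HInv Is _; apply: succ_next.
  by rewrite -ltnS; apply: leq_trans Hlt _.
have -> : \sum_(l | enabled s l) ratr (Prb G s.1 l s.2) *
   (1 - (if (U (cfg_next s l) < U s)%N then c ^+ u else 0)) =
   1 - (\sum_(l | enabled s l && (U (cfg_next s l) < U s)%N) ratr (Prb G s.1 l s.2)) * c ^+ u.
  under eq_bigr do rewrite mulrBr mulr1.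
  rewrite sumrB prb_sum1 //; congr (1 - _).
  rewrite mulr_suml (@big_mkcondr _ _ _ _ _ (enabled s) (fun l => (U (cfg_next s l) < U s)%N)); apply: eq_bigr => l _.
  by case: ifP; rewrite ?mulr0 ?mul0r.
rewrite lerB // exprS ler_wpM2r // ltW //.
by apply: Hc => //; rewrite leNgt Hr.
Qed.

Lemma FS_geo r (c : R) (B : nat) : 0 < c -> c <= 1 ->
  (forall s, Inv s -> V s <= r -> s != sigma_bot G -> kind G s.1 = KProb ->
     c < \sum_(l' | enabled s l' && (U (cfg_next s l') < U s)%N)
                  ratr (Prb G s.1 l' s.2)) ->
  (forall s, Inv s -> V s <= r -> (U s <= B)%N) ->
  forall k h s, Inv s -> FS r one (k * B) h s <= (1 - c ^+ B) ^+ k.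
Proof.
move=> c0 c1 Hc HB.
have d0 : 0 <= 1 - c ^+ B by rewrite subr_ge0 exprn_ile1 // ltW.
elim=> [|k IH] h s Is; first by rewrite mul0n expr0 FS_le1.
rewrite mulSn FS_comp.
apply: (@le_trans _ _ (FS r (fun _ _ => (1 - c ^+ B) ^+ k) B h s)).
  by apply: FS_mono => // h' s' Is'; apply: IH.
rewrite FS_const exprSr; apply: ler_wpM2l; first exact: exprn_ge0.
case Hr: (r < V s); first by rewrite FS_stop ?Hr ?orbT.
by apply: (FS_L _ _ c0 c1 Hc) => //; apply: HB => //; rewrite leNgt Hr.
Qed.


Hypothesis HInit : Inv (sigma_init G).
Hypothesis Hcond : forall r : R,
     (exists B : nat, forall s, Inv s -> V s <= r -> (U s <= B)%N) /\
     (exists2 eps : R, 0 < eps &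
        forall s, Inv s -> V s <= r -> s != sigma_bot G -> kind G s.1 = KProb ->
          eps < \sum_(l' | enabled s l' && (U (cfg_next s l') < U s)%N)
                  ratr (Prb G s.1 l' s.2)).

Lemma prob_term_one : prob_term_sched R sc = 1.
Proof.
rewrite /prob_term_sched.
set E := (X in sup X).
have ub : forall x, E x -> x <= 1 by move=> x [n _ <-]; apply: reach_le1.
have ne : E !=set0 by exists (reach R sc 0 [::] (sigma_init G)); exists 0%N.
have hub : has_ubound E by exists 1 => x Ex; apply: ub.
have key : forall eta, 0 < eta -> 1 - eta <= sup E.
  move=> eta eta0.
  set v := V (sigma_init G).
  have v0 : 0 <= v by apply: V_ge0.
  set r := 2 * (v + 1) / eta.
  have r0 : 0 < r by rewrite /r mulr_gt0 ?invr_gt0 // mulr_gt0 // ltr_pwDr.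
  have Hvr : v / r <= eta / 2.
    rewrite ler_pdivrMr //.
    have -> : eta / 2 * r = v + 1 by rewrite /r; field; lra.
    lra.
  have [[B HB] [eps eps0 Heps]] := Hcond r.
  set c := Num.min eps 1.
  have c0 : 0 < c by rewrite lt_min eps0 ltr01.
  have c1 : c <= 1 by rewrite ge_min lexx orbT.
  have ce : c <= eps by rewrite ge_min lexx.
  have Hc : forall s, Inv s -> V s <= r -> s != sigma_bot G -> kind G s.1 = KProb ->
     c < \sum_(l' | enabled s l' && (U (cfg_next s l') < U s)%N) ratr (Prb G s.1 l' s.2).
    by move=> s Is Vs Hb Hk; apply: le_lt_trans ce (Heps s Is Vs Hb Hk).
  have d01 : 0 < c ^+ B <= 1 by rewrite exprn_gt0 //= exprn_ile1 // ltW.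
  have [k Hk] := @geo_small R _ (eta / 2) d01 (ltac:(lra) : 0 < eta / 2).
  have H1 := reach_FS r (k * B)%N [::] (sigma_init G) r0 HInit.
  have H2 := FS_geo _ _ _ c0 c1 Hc HB k [::] _ HInit.
  have H3 : reach R sc (k * B)%N [::] (sigma_init G) <= sup E.
    by apply: ub_le_sup hub _ _; exists (k * B)%N.
  rewrite -/v in H1; lra.
case: (leP 1 (sup E)) => H.
  by apply/eqP; rewrite eq_le H andbT; apply: ge_sup.
have := key ((1 - sup E) / 2); lra.
Qed.

End Proof.

Theorem mainTheorem3 (R : realType) (G : CFG) (Hwf : wf_cfg G)
  (Inv : set (state G)) (V : state G -> R) (U : state G -> nat) :
  inductive_invariant Inv ->
  Inv (sigma_init G) ->
  supermartingale Inv V ->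
  V (sigma_bot G) = 0 ->
  (forall s, Inv s -> s != sigma_bot G -> 0 < V s) ->
  U (sigma_bot G) = 0%N ->
  (forall s, Inv s -> s != sigma_bot G -> kind G s.1 <> KProb ->
     forall s', cfg_succ s s' -> (U s' < U s)%N) ->
  (forall r : R,
     (exists B : nat, forall s, Inv s -> V s <= r -> (U s <= B)%N) /\
     (exists2 eps : R, 0 < eps &
        forall s, Inv s -> V s <= r -> s != sigma_bot G -> kind G s.1 = KProb ->
          eps < \sum_(l' | enabled s l' && (U (cfg_next s l') < U s)%N)
                  ratr (Prb G s.1 l' s.2))) ->
  Pr_term G R = 1.
Proof.
move=> HInv HInit HVsm HVbot HVpos HUbot HUdec Hcond.
rewrite /Pr_term.
have Hex : forall s : state G, exists l', enabled s l' by case: Hwf.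
pose sc0 : scheduler G := fun _ s => xchoose (Hex s).
have Hsc0 : valid_sched sc0 by move=> h s _; apply: xchooseP.
set S := [set p | _].
have -> : S = [set 1].
  apply/seteqP; split => x /=.
    case=> sc Hsc ->.
    exact: (@prob_term_one R G Hwf sc Hsc Inv V U HInv HVsm HVbot HVpos HUdec HInit Hcond).
  move=> ->; exists sc0 => //.
  by rewrite (@prob_term_one R G Hwf sc0 Hsc0 Inv V U HInv HVsm HVbot HVpos HUdec HInit Hcond).
exact: inf1.
Qed.
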